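(* In the model described in the context, for every number of users $N\in\mathbb{N}$, $$\Delta C(N)\le \frac{1}{T}\sum_{t=0}^{T-1}\sum_{m=1}^{M}S(m)\sum_{n\in\mathcal{B}_t(m)}\mathbb{E}\bigl[I_{n,t}(m)\,C'(L_t)-C'(L_{t-1})\bigr].$$
   Context: There are $N$ users, $M$ data items and a period of $T$ time slots. Item $m\in\{1,\dots,M\}$ has size $S(m)>0$. For each user $n$ and slot $t$ there is a demand profile $\mathbf{P}_{n,t}=(P_{n,t}(m))_{m=1}^M$ with $P_{n,t}(m)\ge 0$ and $\sum_m P_{n,t}(m)\le 1$. The profiles are periodic: $\mathbf{P}_{n,t}=\mathbf{P}_{n,t+kT}$ for all integers $k\ge 0$. The demand is modeled by $\{0,1\}$-valued random variables $I_{n,t}(m)$ with $\Pr(I_{n,t}(m)=1)=P_{n,t}(m)$ and $\sum_m I_{n,t}(m)\le 1$ (each user requests at most one item per slot). For $n\neq k$, $(I_{n,t}(m))_m$ is independent of $(I_{k,t}(j))_j$. The non-proactive load is $L_t=\sum_{m=1}^M\sum_{n=1}^N S(m)I_{n,t}(m)$. The cost function $C:\mathbb{R}_+\to\mathbb{R}_+$ is smooth, strictly convex and monotonically increasing, with derivative $C'$. Slot indices are taken modulo $T$, so $L_{-1}$ stands for $L_{T-1}$ and $x_{n,T}=x_{n,0}$. The non-proactive cost is $C^{\mathcal N}(N)=\frac1T\sum_{t=0}^{T-1}\mathbb{E}[C(L_t)]$. The proactive cost is $$C^{\mathcal P}(N)=\min_{\mathbf{x}}\ \frac1T\sum_{t=0}^{T-1}\mathbb{E}\Bigl[C\Bigl(L_t+\sum_{m=1}^M\sum_{n=1}^N\bigl(x_{n,t+1}(m)-x_{n,t}(m)I_{n,t}(m)\bigr)\Bigr)\Bigr],$$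 minimized over proactive downloads $x_{n,t}(m)$ subject to $0\le x_{n,t}(m)\le S(m)$ for all $m,n$ and $t=0,\dots,T-1$, and $x_{n,0}=x_{n,T}$. Here $x_{n,t+1}(m)$ is the portion of item $m$ sent to user $n$ in slot $t$ ahead of slot $t+1$. The cost reduction is $\Delta C(N)=C^{\mathcal N}(N)-C^{\mathcal P}(N)$. The set of active users for item $m$ at slot $t$ is $\mathcal{B}_t(m)=\{n:\mathbb{E}[I_{n,t}(m)C'(L_t)-C'(L_{t-1})]>0\}$. *)

(* Defs.v *)
From HB Require Import structures.
From mathcomp Require Import all_boot all_order all_algebra.
From mathcomp Require Import boolp classical_sets reals.
Set Implicit Arguments. Unset Strict Implicit. Unset Printing Implicit Defensive.
Import Order.TTheory GRing.Theory Num.Theory.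
Local Open Scope ring_scope.

Section Model.
Variable R : realType.

Definition deriv_nonneg (f f' : R -> R) : Prop :=
  forall x, 0 <= x -> forall e, 0 < e -> exists2 d, 0 < d &
    forall h, h != 0 -> `|h| < d -> 0 <= x + h ->
      `|(f (x + h) - f x) / h - f' x| < e.

Definition smooth_nonneg (f f' : R -> R) : Prop :=
  exists D : nat -> R -> R,
    [/\ D 0%N = f, D 1%N = f' & forall k, deriv_nonneg (D k) (D k.+1)].

Definition strictly_convex_nonneg (f : R -> R) : Prop :=
  forall x y l, 0 <= x -> 0 <= y -> x != y -> 0 < l -> l < 1 ->
    f (l * x + (1 - l) * y) < l * f x + (1 - l) * f y.

Definition increasing_nonneg (f : R -> R) : Prop :=
  forall x y, 0 <= x -> x <= y -> f x <= f y.

Definition cost_fun (C C' : R -> R) : Prop :=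
  [/\ forall x, 0 <= x -> 0 <= C x,
      smooth_nonneg C C',
      strictly_convex_nonneg C &
      increasing_nonneg C].

Variables (Omega : finType) (mu : Omega -> R).

Definition prob_space : Prop :=
  (forall w, 0 <= mu w) /\ \sum_(w : Omega) mu w = 1.

Definition Ex (f : Omega -> R) : R := \sum_(w : Omega) mu w * f w.
Definition Pr (A : pred Omega) : R := \sum_(w : Omega | A w) mu w.

Variables (N M T : nat).
Variable S : 'I_M -> R.
Variable I : 'I_N -> 'I_T -> 'I_M -> Omega -> bool.

Definition ind (b : bool) : R := (b : nat)%:R.

Definition load (t : 'I_T) (w : Omega) : R :=
  \sum_(m < M) \sum_(n < N) S m * ind (I n t m w).

Definition demand_model (P : 'I_N -> 'I_T -> 'I_M -> R) : Prop :=
  [/\ forall n t m, 0 <= P n t m,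
      forall n t, \sum_(m < M) P n t m <= 1,
      forall n t m, Pr (I n t m) = P n t m,
      forall n t w, (\sum_(m < M) (I n t m w : nat) <= 1)%N &
      (* independence of the demand vectors of distinct users in a slot *)
      forall t n k, n != k -> forall a b : 'I_M -> bool,
        Pr (fun w => [forall m, I n t m w == a m] && [forall j, I k t j w == b j])
        = Pr (fun w => [forall m, I n t m w == a m]) *
          Pr (fun w => [forall j, I k t j w == b j])].

Variables C C' : R -> R.

Definition cost_nonproactive : R :=
  T%:R^-1 * \sum_(t < T) Ex (fun w => C (load t w)).

(* feasible proactive downloads: x n t m for t in 'I_T, x_{n,T} := x_{n,0}
   (indices taken modulo T via ordS) *)
Definition feasible (x : 'I_N -> 'I_T -> 'I_M -> R) : Prop :=
  forall n t m, 0 <= x n t m <= S m.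

Definition proactive_objective (x : 'I_N -> 'I_T -> 'I_M -> R) : R :=
  T%:R^-1 * \sum_(t < T) Ex (fun w =>
    C (load t w + \sum_(m < M) \sum_(n < N)
         (x n (ordS t) m - x n t m * ind (I n t m w)))).

(* the minimum over feasible x (attained; written as infimum) *)
Definition cost_proactive : R :=
  inf [set proactive_objective x | x in feasible].

Definition cost_reduction : R := cost_nonproactive - cost_proactive.

(* E[I_{n,t}(m) C'(L_t) - C'(L_{t-1})], with t-1 taken modulo T *)
Definition gain (n : 'I_N) (t : 'I_T) (m : 'I_M) : R :=
  Ex (fun w => ind (I n t m w) * C' (load t w) - C' (load (ord_pred t) w)).

Definition active_users (t : 'I_T) (m : 'I_M) : {set 'I_N} :=
  [set n | 0 < gain n t m].

Definition reduction_bound : R :=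
  T%:R^-1 * \sum_(t < T) \sum_(m < M)
    S m * \sum_(n in active_users t m) gain n t m.

End Model.

(* Main.v *)
Require Import Defs.
From HB Require Import structures.
From mathcomp Require Import all_boot all_order all_algebra.
From mathcomp Require Import boolp classical_sets reals.
From mathcomp Require Import ring lra.
Import Order.TTheory GRing.Theory Num.Theory.
Local Open Scope ring_scope.

Lemma tangent (R : realType) (f f' : R -> R) :
  deriv_nonneg f f' -> strictly_convex_nonneg f ->
  forall x y, 0 <= x -> 0 <= y -> f x + f' x * (y - x) <= f y.
Proof.
move=> Hd Hc x y x0 y0.
have [->|xy] := eqVneq x y; first by rewrite subrr mulr0 addr0.
rewrite leNgt; apply/negP => Hlt.
set D := y - x.
have DN0 : D != 0 by rewrite subr_eq0 eq_sym.
have aP : 0 < `|D| by rewrite normr_gt0.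
set e := (f x + f' x * D - f y) / `|D|.
have eP : 0 < e by apply: divr_gt0 => //; rewrite subr_gt0.
have [d dP Hd'] := Hd x x0 e eP.
set l := Num.min (1/2 : R) (d / (2 * `|D|)).
have lP : 0 < l by rewrite lt_min; apply/andP; split; [lra| apply: divr_gt0 => //; lra].
have l1 : l <= 1/2 by rewrite ge_min lexx.
have l2 : l <= d / (2 * `|D|) by rewrite ge_min lexx orbT.
have l2' : l * `|D| <= d / 2.
  have E : d / (2 * `|D|) * `|D| = d / 2 by field; rewrite gt_eqF.
  by rewrite -E; apply: ler_wpM2r => //; exact: ltW.
set h := l * D.
have hN0 : h != 0 by rewrite mulf_neq0 // gt_eqF.
have hd : `|h| < d by rewrite normrM gtr0_norm //; lra.
have xh : x + h = l * y + (1 - l) * x by rewrite /h /D; ring.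
have xh0 : 0 <= x + h by rewrite xh; apply: addr_ge0; apply: mulr_ge0 => //; lra.
have Hq := Hd' h hN0 hd xh0.
have conv : f (x + h) < l * f y + (1 - l) * f x.
  by rewrite xh; apply: Hc => //; [rewrite eq_sym | lra].
set q := (f (x + h) - f x) / h in Hq.
have qh : q * h = f (x + h) - f x by rewrite /q divfK.
have H1 : q * D < f y - f x.
  have : l * (q * D) < l * (f y - f x) by rewrite mulrCA -/h qh; lra.
  by rewrite ltr_pM2l.
have H2 : `|(q - f' x) * D| < f x + f' x * D - f y.
  rewrite normrM.
  have E : e * `|D| = f x + f' x * D - f y by rewrite /e divfK // gt_eqF.
  by rewrite -E ltr_pM2r.
have := ler_norm (- ((q - f' x) * D)); rewrite normrN.
lra.
Qed.

Lemma sum_swap3 (R : realType) (Omega : finType) (M N : nat)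
  (F : Omega -> 'I_M -> 'I_N -> R) :
  \sum_(w : Omega) \sum_(m < M) \sum_(n < N) F w m n =
  \sum_(m < M) \sum_(n < N) \sum_(w : Omega) F w m n.
Proof.
rewrite exchange_big; apply: eq_bigr => m _; exact: exchange_big.
Qed.

Theorem lemma2 (R : realType) (Omega : finType) (mu : Omega -> R)
  (N M T : nat) (S : 'I_M -> R) (P : 'I_N -> 'I_T -> 'I_M -> R)
  (I : 'I_N -> 'I_T -> 'I_M -> Omega -> bool) (C C' : R -> R) :
  (0 < T)%N ->
  prob_space mu ->
  (forall m, 0 < S m) ->
  demand_model mu I P ->
  cost_fun C C' ->
  cost_reduction mu S I C <= reduction_bound mu S I C'.
Proof.
move=> T0 [mu0 _] S0 _ [C0 [Dn [D0 D1 HD]] Cconv _].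
have Cder : deriv_nonneg C C' by rewrite -D0 -D1.
have ind0 : forall b, 0 <= ind R b by move=> b; rewrite /ind ler0n.
have argP : forall x, feasible S x -> forall t w,
    0 <= load S I t w + \sum_(m < M) \sum_(n < N)
         (x n (ordS t) m - x n t m * ind R (I n t m w)).
  move=> x Fx t w; rewrite /load -big_split /=; apply: sumr_ge0 => m _.
  rewrite -big_split /=; apply: sumr_ge0 => n _.
  have [h1 h2] := andP (Fx n t m); have [h3 _] := andP (Fx n (ordS t) m).
  have : x n t m * ind R (I n t m w) <= S m * ind R (I n t m w).
    by apply: ler_wpM2r.
  lra.
have key : forall x, feasible S x ->
  cost_nonproactive mu S I C - proactive_objective mu S I C x <=
  reduction_bound mu S I C'.
  move=> x Fx.
  rewrite /cost_nonproactive /proactive_objective /reduction_bound -mulrBr.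
  apply: ler_wpM2l; first by rewrite invr_ge0 ler0n.
  set G := fun t w => C' (load S I t w).
  set Dx := fun t w => \sum_(m < M) \sum_(n < N)
           (x n (ordS t) m - x n t m * ind R (I n t m w)).
  apply: (@le_trans _ _ (\sum_(t < T) \sum_(w : Omega) mu w * (- (G t w * Dx t w)))).
    rewrite -sumrB; apply: ler_sum => t _; rewrite /Ex -sumrB.
    apply: ler_sum => w _; rewrite -mulrBr; apply: ler_wpM2l => //.
    have L0 : 0 <= load S I t w.
      by rewrite /load; apply: sumr_ge0 => m _; apply: sumr_ge0 => n _;
        apply: mulr_ge0 => //; apply: ltW.
    have := @tangent R C C' Cder Cconv _ _ L0 (argP x Fx t w).
    rewrite /G /Dx addrAC subrr add0r; lra.
  have -> : \sum_(t < T) \sum_(w : Omega) mu w * (- (G t w * Dx t w)) =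
     \sum_(t < T) \sum_(m < M) \sum_(n < N) x n t m * gain mu S I C' n t m.
    have E1 : forall t w, mu w * (- (G t w * Dx t w)) =
       \sum_(m < M) \sum_(n < N) (mu w * x n t m * ind R (I n t m w) * G t w)
     - \sum_(m < M) \sum_(n < N) (mu w * x n (ordS t) m * G t w).
      move=> t w; rewrite /Dx mulr_sumr -sumrN mulr_sumr -sumrB.
      apply: eq_bigr => m _; rewrite mulr_sumr -sumrN mulr_sumr -sumrB.
      by apply: eq_bigr => n _; ring.
    transitivity (\sum_(t < T) \sum_(m < M) \sum_(n < N) \sum_(w : Omega)
                    (mu w * x n t m * ind R (I n t m w) * G t w)
      - \sum_(t < T) \sum_(m < M) \sum_(n < N) \sum_(w : Omega)
                    (mu w * x n (ordS t) m * G t w)).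
      rewrite -sumrB; apply: eq_bigr => t _.
      rewrite -(@sum_swap3 _ _ _ _ (fun w m n => mu w * x n t m * ind R (I n t m w) * G t w)).
      rewrite -(@sum_swap3 _ _ _ _ (fun w m n => mu w * x n (ordS t) m * G t w)) -sumrB.
      by apply: eq_bigr => w _; rewrite E1.
    transitivity (\sum_(t < T) \sum_(m < M) \sum_(n < N) \sum_(w : Omega)
                    (mu w * x n t m * ind R (I n t m w) * G t w)
      - \sum_(t < T) \sum_(m < M) \sum_(n < N) \sum_(w : Omega)
                    (mu w * x n t m * G (ord_pred t) w)).
      congr (_ - _).
      rewrite [RHS](reindex_inj (@ordS_inj T)) /=.
      by apply: eq_bigr => t _; rewrite ordSK.
    rewrite -sumrB; apply: eq_bigr => t _; rewrite -sumrB; apply: eq_bigr => m _.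
    rewrite -sumrB; apply: eq_bigr => n _.
    rewrite /gain /Ex mulr_sumr -sumrB; apply: eq_bigr => w _.
    rewrite /G; ring.
  apply: ler_sum => t _; apply: ler_sum => m _.
  rewrite mulr_sumr [X in _ <= X]big_mkcond /=; apply: ler_sum => n _.
  have [h1 h2] := andP (Fx n t m).
  rewrite inE; case: ifP => g.
    by apply: ler_wpM2r => //; apply: ltW.
  by apply: mulr_ge0_le0 => //; rewrite leNgt g.
rewrite /cost_reduction.
suff : cost_nonproactive mu S I C - reduction_bound mu S I C' <= cost_proactive mu S I C by lra.
rewrite /cost_proactive; apply: lb_le_inf.
  exists (proactive_objective mu S I C (fun _ _ _ => 0)); exists (fun _ _ _ => 0) => //.
  by move=> n t m; rewrite lexx; apply: ltW.
move=> _ [x Fx <-]; have := key x Fx; lra.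
Qed.
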